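(* Let $\lambda\in\mathbb{R}$, let $r,n\ge1$ be integers and let $z\in\mathbb{C}$. Then \[ \phi_{n,\lambda}^{(r,r)}(|z|^2)=\langle z|\prod_{k=0}^{n-1}\big[(a^{\dagger})^{r}a^{r}-k\lambda\big]|z\rangle=\sum_{p=0}^{nr}\sum_{k=p}^{nr}\frac{(-1)^{k-p}}{k!}\binom{k}{p}\big((p)_r\big)_{n,\lambda}\,(|z|^2)^{k}. \] In particular, when $|z|=1$, \[ \phi_{n,\lambda}^{(r,r)}=\langle z|\prod_{k=0}^{n-1}\big[(a^{\dagger})^{r}a^{r}-k\lambda\big]|z\rangle=\sum_{p=0}^{nr}\sum_{k=p}^{nr}\frac{(-1)^{k-p}}{k!}\binom{k}{p}\big((p)_r\big)_{n,\lambda}. \]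
   Context: Notation: $(x)_0=1$, $(x)_m=x(x-1)\cdots(x-m+1)$; $(y)_{0,\lambda}=1$, $(y)_{n,\lambda}=y(y-\lambda)\cdots(y-(n-1)\lambda)$. The boson annihilation and creation operators $a,a^{\dagger}$ satisfy $[a,a^{\dagger}]=aa^{\dagger}-a^{\dagger}a=1$ and act on the orthonormal number states $|m\rangle$ ($m=0,1,2,\dots$, $\langle m|n\rangle=\delta_{m,n}$) by $a|m\rangle=\sqrt{m}\,|m-1\rangle$, $a^{\dagger}|m\rangle=\sqrt{m+1}\,|m+1\rangle$. For $z\in\mathbb{C}$ the coherent state is $|z\rangle=e^{-|z|^2/2}\sum_{n\ge0}\frac{z^n}{\sqrt{n!}}|n\rangle$, so $a|z\rangle=z|z\rangle$, $\langle z|a^{\dagger}=\bar z\langle z|$, $\langle z|z\rangle=1$. The numbers $S_\lambda^{(r,r)}(n,k)$, $0\le k\le nr$, are defined by the normal ordering identity $\prod_{j=0}^{n-1}\big((a^{\dagger})^{r}a^{r}-j\lambda\big)=\sum_{k=0}^{nr}S_\lambda^{(r,r)}(n,k)(a^{\dagger})^{k}a^{k}$ (equivalently, the same identity with $a^{\dagger}$ replaced by multiplication by $x$ and $a$ by $d/dx$), and $\phi_{n,\lambda}^{(r,r)}(x)=\sum_{k=0}^{nr}S_\lambda^{(r,r)}(n,k)x^k$, $\phi_{n,\lambda}^{(r,r)}=\phi_{n,\lambda}^{(r,r)}(1)$. *)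

(* Defs.v *)
From Stdlib Require Import Reals Factorial.
From Coquelicot Require Import Coquelicot.
Open Scope R_scope.

Fixpoint falling (x : R) (m : nat) : R :=
  match m with O => 1 | S m' => falling x m' * (x - INR m') end.

Fixpoint gfalling (lam y : R) (n : nat) : R :=
  match n with O => 1 | S n' => gfalling lam y n' * (y - INR n' * lam) end.

(** Binomial coefficient k choose p (for p <= k), as a real number. *)
Definition binom (k p : nat) : R :=
  INR (fact k) / (INR (fact p) * INR (fact (k - p))).

(** Fock space: a state is given by its coefficient sequence in the number
    basis |m>, i.e. v = sum_m v m |m>. Operators act on all coefficient
    sequences (they are "local", so this is well-defined). *)
Definition fock := nat -> C.

(** Annihilation: a|m> = sqrt m |m-1>, i.e. (a v)_m = sqrt(m+1) v_{m+1}. *)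
Definition ann (v : fock) : fock :=
  fun m => Cmult (RtoC (sqrt (INR (S m)))) (v (S m)).

(** Creation: a^dag|m> = sqrt(m+1) |m+1>, i.e. (a^dag v)_{m+1} = sqrt(m+1) v_m,
    (a^dag v)_0 = 0. *)
Definition cre (v : fock) : fock :=
  fun m => match m with
           | O => RtoC 0
           | S m' => Cmult (RtoC (sqrt (INR m))) (v m')
           end.

Definition normal_op (k : nat) (v : fock) : fock :=
  Nat.iter k cre (Nat.iter k ann v).

(** prod_{j=0}^{n-1} ((a^dag)^r a^r - j lambda), as the composition
    A_0 o A_1 o ... o A_{n-1} (the factors commute). *)
Fixpoint prod_op (r : nat) (lam : R) (n : nat) (v : fock) : fock :=
  match n with
  | O => v
  | S n' => prod_op r lam n'
              (fun m => Cminus (normal_op r v m) (Cmult (RtoC (INR n' * lam)) (v m)))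
  end.

Definition coh (z : C) : fock :=
  fun m => Cmult (RtoC (exp (- (Cmod z ^ 2) / 2) / sqrt (INR (fact m)))) (pow_n z m).

(** phi^{(r,r)}_{n,lambda}(x) = sum_{k=0}^{nr} S(n,k) x^k, given the
    coefficients S k = S^{(r,r)}_lambda(n,k). *)
Definition phi (Sc : nat -> R) (n r : nat) (x : R) : R :=
  sum_f_R0 (fun k => Sc k * x ^ k) (n * r).

(** Right-hand side: sum_{p=0}^{nr} sum_{k=p}^{nr} (-1)^{k-p}/k! C(k,p) ((p)_r)_{n,lambda} x^k
    (inner index k = p + j, j = 0..nr-p). *)
Definition rhs (lam : R) (n r : nat) (x : R) : R :=
  sum_f_R0 (fun p =>
    sum_f_R0 (fun j =>
      (-1) ^ j / INR (fact (p + j)) * binom (p + j) p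
        * gfalling lam (falling (INR p) r) n * x ^ (p + j))
      (n * r - p))
    (n * r).

(* Main.v *)
Require Import Defs.
From Stdlib Require Import Reals Factorial Lia Lra FunctionalExtensionality.
From Coquelicot Require Import Coquelicot.
Open Scope R_scope.

Lemma RC_mul (a : R) (u : C) : Cmult (RtoC a) u = (a * fst u, a * snd u).
Proof. destruct u; unfold Cmult, RtoC; simpl; f_equal; ring. Qed.

Lemma cre_mul k (a : R) (c : nat -> R) (u : fock) m :
  (forall j, c j = INR j - a) ->
  Nat.iter k cre (fun j => Cmult (RtoC (c j)) (u j)) m
  = Cmult (RtoC (INR m - INR k - a)) (Nat.iter k cre u m).
Proof.
  intros Hc. revert m a c Hc. induction k as [|k IH]; intros m a c Hc.
  - simpl. rewrite Hc. f_equal. f_equal. ring.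
  - simpl Nat.iter. unfold cre at 1 3. destruct m as [|m].
    + rewrite !RC_mul. unfold RtoC; simpl; f_equal; ring.
    + rewrite (IH m a c Hc). rewrite !RC_mul. cbn [fst snd].
      rewrite !S_INR. f_equal; ring.
Qed.

Lemma cre_ann (u : fock) j : cre (ann u) j = Cmult (RtoC (INR j - 0)) (u j).
Proof.
  unfold cre, ann. destruct j as [|j].
  - rewrite !RC_mul. simpl. unfold RtoC. f_equal; ring.
  - rewrite !RC_mul. cbn [fst snd].
    replace (INR (S j) - 0) with (sqrt (INR (S j)) * sqrt (INR (S j))).
    2:{ rewrite sqrt_sqrt. ring. apply pos_INR. }
    f_equal; ring.
Qed.

Lemma normal_op_eq k v m : normal_op k v m = Cmult (RtoC (falling (INR m) k)) (v m).
Proof.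
  revert v m. induction k as [|k IH]; intros v m.
  - unfold normal_op. simpl. rewrite RC_mul. destruct (v m); simpl; f_equal; ring.
  - unfold normal_op. rewrite Nat.iter_succ_r. simpl (Nat.iter (S k) ann v).
    transitivity (Nat.iter k cre (fun j => Cmult (RtoC (INR j - 0)) (Nat.iter k ann v j)) m).
    { f_equal. apply functional_extensionality. intros j. apply cre_ann. }
    rewrite (cre_mul k 0 (fun j => INR j - 0)) by auto.
    fold (normal_op k v). rewrite IH. rewrite !RC_mul. simpl. f_equal; ring.
Qed.

Lemma prod_op_eq r lam n v m :
  prod_op r lam n v m = Cmult (RtoC (gfalling lam (falling (INR m) r) n)) (v m).
Proof.
  revert v m. induction n as [|n IH]; intros v m.
  - simpl. rewrite RC_mul. destruct (v m); simpl; f_equal; ring.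
  - simpl prod_op. rewrite IH. rewrite normal_op_eq.
    unfold Cminus. rewrite !RC_mul. destruct (v m) as [a b].
    unfold Cplus, Copp, RtoC, Cmult. cbn [fst snd gfalling]. f_equal; ring.
Qed.

Lemma sum_switch (u : nat -> nat -> R) m n :
  sum_f_R0 (fun i => sum_f_R0 (u i) n) m = sum_f_R0 (fun j => sum_f_R0 (fun i => u i j) m) n.
Proof.
  induction m as [|m IH].
  - simpl. apply sum_eq. auto.
  - cbn [sum_f_R0]. rewrite IH, <- plus_sum. apply sum_eq. auto.
Qed.

Lemma sum_tri (F : nat -> nat -> R) N :
  sum_f_R0 (fun p => sum_f_R0 (F p) (N - p)) N
  = sum_f_R0 (fun m => sum_f_R0 (fun q => F q (m - q)%nat) m) N.
Proof.
  induction N as [|N IH].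
  - simpl. reflexivity.
  - cbn [sum_f_R0]. rewrite <- IH.
    rewrite (sum_eq (fun p => sum_f_R0 (F p) (S N - p))
               (fun p => sum_f_R0 (F p) (N - p) + F p (S N - p)%nat)).
    2:{ intros i Hi. replace (S N - i)%nat with (S (N - i)) by lia. cbn [sum_f_R0].
        reflexivity. }
    rewrite plus_sum. replace (S N - S N)%nat with 0%nat by lia. simpl. ring.
Qed.

Lemma sum_shift (f : nat -> R) i N : (i <= N)%nat -> (forall p, (p < i)%nat -> f p = 0) ->
  sum_f_R0 f N = sum_f_R0 (fun q => f (q + i)%nat) (N - i).
Proof.
  revert f N. induction i as [|i IH]; intros f N HiN Hf.
  - replace (N - 0)%nat with N by lia. apply sum_eq. intros. f_equal. lia.
  - rewrite decomp_sum by lia. rewrite Hf by lia.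
    rewrite (IH (fun k => f (S k)) (pred N)) by (try lia; intros; apply Hf; lia).
    replace (pred N - i)%nat with (N - S i)%nat by lia.
    rewrite Rplus_0_l. apply sum_eq. intros. f_equal. lia.
Qed.

Lemma exp_trunc (x : R) M :
  sum_f_R0 (fun q => sum_f_R0 (fun j => x ^ q / INR (fact q) * ((- x) ^ j / INR (fact j))) (M - q)) M = 1.
Proof.
  rewrite (sum_tri (fun q j => x ^ q / INR (fact q) * ((- x) ^ j / INR (fact j)))).
  rewrite (sum_eq _ (fun m => (x + - x) ^ m / INR (fact m))).
  2:{ intros m Hm. rewrite binomial. unfold Rdiv. rewrite (Rmult_comm (sum_f_R0 _ m)), scal_sum.
      apply sum_eq. intros q Hq. unfold Binomial.C.
      pose proof (INR_fact_neq_0 q). pose proof (INR_fact_neq_0 (m - q)). pose proof (INR_fact_neq_0 m).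
      field. auto. }
  replace (x + - x) with 0 by ring.
  induction M as [|M IH].
  - simpl. field.
  - cbn [sum_f_R0]. rewrite IH. replace (0 ^ S M) with 0 by (simpl; ring). unfold Rdiv. ring.
Qed.


Lemma falling_zero p i : (p < i)%nat -> falling (INR p) i = 0.
Proof.
  induction i as [|i IH]; intros H; [lia|]. simpl.
  destruct (Nat.eq_dec p i) as [->|Hne].
  - ring.
  - rewrite IH by lia. ring.
Qed.

Lemma falling_fact p i : (i <= p)%nat -> falling (INR p) i * INR (fact (p - i)) = INR (fact p).
Proof.
  induction i as [|i IH]; intros H.
  - simpl. rewrite Nat.sub_0_r. ring.
  - simpl falling. rewrite <- IH by lia.
    replace (p - i)%nat with (S (p - S i)) by lia.
    rewrite fact_simpl, mult_INR. rewrite (S_INR (p - S i)), minus_INR by lia.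
    rewrite S_INR. ring.
Qed.

Lemma sum_scal_r (f : nat -> R) c N : sum_f_R0 (fun i => f i * c) N = sum_f_R0 f N * c.
Proof. rewrite <- scal_sum. ring. Qed.

Lemma sum_zero (f : nat -> R) N : (forall i, (i <= N)%nat -> f i = 0) -> sum_f_R0 f N = 0.
Proof. intros H. rewrite (sum_eq f (fun _ => 0)) by auto. rewrite sum_cte. ring. Qed.

Lemma per_i (x ci : R) (i N : nat) : (i <= N)%nat ->
  sum_f_R0 (fun p => sum_f_R0 (fun j =>
     ci * falling (INR p) i * ((-1) ^ j * x ^ (p + j) / (INR (fact p) * INR (fact j)))) (N - p)) N
  = ci * x ^ i.
Proof.
  intros HiN.
  rewrite (sum_shift _ i N HiN).
  2:{ intros p Hp. apply sum_zero. intros j _. rewrite falling_zero by lia. ring. }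
  rewrite (sum_eq _ (fun q => sum_f_R0 (fun j =>
     x ^ q / INR (fact q) * ((- x) ^ j / INR (fact j)) * (ci * x ^ i)) ((N - i) - q))).
  2:{ intros q Hq. replace (N - (q + i))%nat with (N - i - q)%nat by lia.
      apply sum_eq. intros j Hj.
      pose proof (falling_fact (q + i) i ltac:(lia)) as HF.
      replace (q + i - i)%nat with q in HF by lia.
      rewrite <- HF.
      pose proof (INR_fact_neq_0 q). pose proof (INR_fact_neq_0 j).
      assert (falling (INR (q + i)) i <> 0).
      { intro E. rewrite E in HF. pose proof (INR_fact_neq_0 (q + i)). lra. }
      rewrite !pow_add. replace ((- x) ^ j) with ((-1) ^ j * x ^ j)
        by (rewrite <- Rpow_mult_distr; f_equal; ring).
      field. auto. }
  rewrite (sum_eq _ (fun q => sum_f_R0 (fun j =>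
     x ^ q / INR (fact q) * ((- x) ^ j / INR (fact j))) ((N - i) - q) * (ci * x ^ i))).
  2:{ intros q _. apply sum_scal_r. }
  rewrite sum_scal_r, exp_trunc. ring.
Qed.

Lemma phi_rhs (Sc : nat -> R) (g : nat -> R) (N : nat) (x : R) :
  (forall p, g p = sum_f_R0 (fun i => Sc i * falling (INR p) i) N) ->
  sum_f_R0 (fun k => Sc k * x ^ k) N =
  sum_f_R0 (fun p =>
    sum_f_R0 (fun j =>
      (-1) ^ j / INR (fact (p + j)) * binom (p + j) p
        * g p * x ^ (p + j))
      (N - p))
    N.
Proof.
  intros Hg.
  rewrite (sum_eq (fun p => sum_f_R0 _ (N - p)) (fun p => sum_f_R0 (fun j => sum_f_R0 (fun i =>
     Sc i * falling (INR p) i * ((-1) ^ j * x ^ (p + j) / (INR (fact p) * INR (fact j)))) N) (N - p))).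
  2:{ intros p _. apply sum_eq. intros j _. rewrite Hg.
      rewrite sum_scal_r. unfold binom. replace (p + j - p)%nat with j by lia.
      pose proof (INR_fact_neq_0 p). pose proof (INR_fact_neq_0 j). pose proof (INR_fact_neq_0 (p + j)).
      field. auto. }
  rewrite (sum_eq (fun p => sum_f_R0 _ (N - p)) (fun p => sum_f_R0 (fun i => sum_f_R0 (fun j =>
     Sc i * falling (INR p) i * ((-1) ^ j * x ^ (p + j) / (INR (fact p) * INR (fact j)))) (N - p)) N)).
  2:{ intros p _. apply sum_switch. }
  rewrite sum_switch. apply sum_eq. intros i Hi. symmetry. apply per_i. auto.
Qed.

Lemma sum_n_RtoC (a : nat -> R) N : sum_n (fun k => RtoC (a k)) N = RtoC (sum_n a N).
Proof.
  induction N as [|N IH].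
  - rewrite !sum_O. reflexivity.
  - rewrite !sum_Sn, IH. unfold plus; simpl. rewrite RtoC_plus. reflexivity.
Qed.

Lemma is_series_RtoC (a : nat -> R) (l : R) :
  is_series a l -> @is_series C_AbsRing C_NormedModule (fun k => RtoC (a k)) (RtoC l).
Proof.
  intros H. unfold is_series in *.
  eapply filterlim_ext. { intros N. symmetry. apply sum_n_RtoC. }
  eapply filterlim_comp. apply H.
  intros P [eps HP]. exists eps. intros y Hy. apply HP.
  apply C_NormedModule_mixin_compat1.
  unfold minus, plus, opp; simpl. rewrite <- RtoC_opp, <- RtoC_plus, Cmod_R.
  exact Hy.
Qed.

Lemma exp_base (x c : R) : is_series (fun k => c * (x ^ k / INR (fact k))) (c * exp x).
Proof.
  pose proof (is_exp_Reals x) as H. unfold is_pseries in H.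
  apply (is_series_scal_l c) in H.
  eapply is_series_ext; [|exact H]. intros k. cbn. unfold scal; simpl. unfold mult; simpl.
  rewrite pow_n_pow. unfold Rdiv. reflexivity.
Qed.

Lemma exp_series_i (x : R) (i : nat) :
  is_series (fun m => x ^ m * falling (INR m) i / INR (fact m)) (x ^ i * exp x).
Proof.
  destruct i as [|i].
  - eapply is_series_ext; [|apply (exp_base x (x ^ 0))]. intros k. simpl. field. apply INR_fact_neq_0.
  - apply (is_series_decr_n _ (S i)). lia.
    simpl pred. replace (plus (x ^ S i * exp x) (opp (sum_n _ i))) with (x ^ S i * exp x).
    2:{ rewrite sum_n_Reals.
    rewrite sum_zero. 2:{ intros p Hp. rewrite falling_zero by lia. unfold Rdiv. ring. }
    unfold plus, opp; simpl; ring. }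
    eapply is_series_ext; [|apply (exp_base x (x ^ S i))]. intros k.
    pose proof (falling_fact (S i + k) (S i) ltac:(lia)) as HF.
    replace (S i + k - S i)%nat with k in HF by lia.
    rewrite <- HF. rewrite pow_add.
    pose proof (INR_fact_neq_0 k). pose proof (INR_fact_neq_0 (S i + k)).
    assert (falling (INR (S i + k)) (S i) <> 0).
    { intro E. rewrite E in HF. lra. }
    match goal with |- ?a = ?b => change (@eq R a b) end. field. auto.
Qed.

Lemma is_series_sum (f : nat -> nat -> R) (l : nat -> R) N :
  (forall i, is_series (f i) (l i)) ->
  is_series (fun m => sum_f_R0 (fun i => f i m) N) (sum_f_R0 l N).
Proof.
  intros H. induction N as [|N IH].
  - simpl. apply H.
  - simpl. apply (is_series_plus _ _ _ _ IH (H (S N))).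
Qed.

Lemma Cmod_pow_n (z : C) m : Cmod (pow_n z m) = Cmod z ^ m.
Proof.
  induction m as [|m IH].
  - simpl. apply Cmod_1.
  - simpl. unfold mult; simpl. rewrite Cmod_mult, IH. reflexivity.
Qed.

Lemma Cconj_RtoC (c : R) : Cconj (RtoC c) = RtoC c.
Proof. unfold Cconj, RtoC; simpl. f_equal. ring. Qed.

Lemma coh_term (z : C) (G : R) m :
  Cmult (Cconj (coh z m)) (Cmult (RtoC G) (coh z m))
  = RtoC (exp (- (Cmod z ^ 2)) * (Cmod z ^ 2) ^ m / INR (fact m) * G).
Proof.
  unfold coh.
  set (c := exp (- (Cmod z ^ 2) / 2) / sqrt (INR (fact m))).
  set (w := pow_n z m).
  rewrite Cmult_conj, Cconj_RtoC.
  transitivity (Cmult (RtoC (c * c * G)) (Cmult w (Cconj w))).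
  { rewrite !RtoC_mult. ring. }
  rewrite <- Cmod2_conj, <- RtoC_mult. f_equal.
  unfold w. rewrite Cmod_pow_n.
  assert (Hc : c * c = exp (- (Cmod z ^ 2)) / INR (fact m)).
  { unfold c. pose proof (INR_fact_neq_0 m).
    assert (Hs : sqrt (INR (fact m)) * sqrt (INR (fact m)) = INR (fact m))
      by (apply sqrt_sqrt, pos_INR).
    assert (sqrt (INR (fact m)) <> 0) by (intro E; rewrite E in Hs; lra).
    replace (exp (- Cmod z ^ 2) ) with (exp (- (Cmod z ^ 2) / 2) * exp (- (Cmod z ^ 2) / 2)).
    2:{ rewrite <- exp_plus. f_equal. field. }
    set (s := sqrt (INR (fact m))) in *. rewrite <- Hs. field. auto. }
  rewrite Hc. rewrite <- !pow_mult, Nat.mul_comm. match goal with |- ?a = ?b => change (@eq R a b) end. unfold Rdiv. ring.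
Qed.

Theorem theorem6 (lam : R) (r n : nat) (Hr : (1 <= r)%nat) (Hn : (1 <= n)%nat)
  (Sc : nat -> R)
  (HS : forall (v : fock) (m : nat),
      prod_op r lam n v m
      = sum_n (fun k => Cmult (RtoC (Sc k)) (normal_op k v m)) (n * r))
  (z : C) :
  is_series (fun m => Cmult (Cconj (coh z m)) (prod_op r lam n (coh z) m))
            (RtoC (phi Sc n r (Cmod z ^ 2)))
  /\ phi Sc n r (Cmod z ^ 2) = rhs lam n r (Cmod z ^ 2)
  /\ (Cmod z = 1 ->
        is_series (fun m => Cmult (Cconj (coh z m)) (prod_op r lam n (coh z) m))
                  (RtoC (phi Sc n r 1))
        /\ phi Sc n r 1 = rhs lam n r 1).
Proof.
  assert (Hg : forall m, gfalling lam (falling (INR m) r) n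
                 = sum_f_R0 (fun k => Sc k * falling (INR m) k) (n * r)).
  { intros m. specialize (HS (fun _ => RtoC 1) m).
    rewrite prod_op_eq in HS.
    rewrite (sum_n_ext _ (fun k => RtoC (Sc k * falling (INR m) k))) in HS.
    2:{ intros k. rewrite normal_op_eq. rewrite Cmult_1_r, RtoC_mult. reflexivity. }
    rewrite sum_n_RtoC, sum_n_Reals, Cmult_1_r in HS.
    apply (f_equal fst) in HS. exact HS. }
  assert (Hphi : forall x, phi Sc n r x = rhs lam n r x).
  { intros x. unfold phi, rhs. apply phi_rhs. exact Hg. }
  assert (Hser : is_series (fun m => Cmult (Cconj (coh z m)) (prod_op r lam n (coh z) m))
            (RtoC (phi Sc n r (Cmod z ^ 2)))).
  { set (x := Cmod z ^ 2).
    set (f := fun i m => Sc i * exp (- x) * (x ^ m * falling (INR m) i / INR (fact m))).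
    set (l := fun i => Sc i * exp (- x) * (x ^ i * exp x)).
    replace (phi Sc n r x) with (sum_f_R0 l (n * r)).
    2:{ unfold phi. apply sum_eq. intros i _. unfold l.
        replace (Sc i * exp (- x) * (x ^ i * exp x)) with (Sc i * x ^ i * (exp (- x) * exp x)) by ring.
        rewrite <- exp_plus. replace (- x + x) with 0 by ring. rewrite exp_0. ring. }
    eapply is_series_ext.
    2:{ apply is_series_RtoC. apply (is_series_sum f l).
        intros i. unfold f, l.
        pose proof (is_series_scal_l (K := R_AbsRing) (V := R_NormedModule) (Sc i * exp (- x)) _ _ (exp_series_i x i)) as H.
        exact H. }
    intros m. cbv beta. rewrite prod_op_eq, coh_term. f_equal.
    unfold f. rewrite Hg.
    rewrite (sum_eq _ (fun i => (Sc i * falling (INR m) i) * (exp (- x) * x ^ m / INR (fact m)))).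
    2:{ intros i _. unfold Rdiv. ring. }
    rewrite sum_scal_r. fold x. ring. }
  split; [exact Hser|]. split; [apply Hphi|].
  intros H1. rewrite H1 in Hser. rewrite pow1 in Hser. split; [exact Hser|apply Hphi].
Qed.
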